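(* Let $e_1,e_2\in[0,1)$, $p_1,p_2>0$, and let $K,L,M,N$ be the real numbers defined in the context. For $f_2\in\mathbb{R}$ define \[ \begin{split} \alpha &= p_1(1+e_2\cos f_2)\bigl(K\sin f_2 - M(e_2+\cos f_2)\bigr) + p_2e_1e_2\sin f_2, \\ \beta &= p_1(1+e_2\cos f_2)\bigl(L\sin f_2 - N(e_2+\cos f_2)\bigr), \\ \gamma &= p_2e_2\sin f_2,\\ \kappa &= -p_2e_1(L\cos f_2 + N\sin f_2), \\ \lambda &= p_2e_1(K\cos f_2 + M\sin f_2), \\ \mu &= -p_2(1+e_1^2)(L\cos f_2 + N\sin f_2),\\ \nu &= p_1e_1(1+e_2\cos f_2) + p_2(K\cos f_2 + M\sin f_2), \end{split} \] and let \[ \mathscr{T}(f_2) = \begin{pmatrix} \alpha^2+\beta^2 & 0 & \beta\kappa-\alpha\lambda & 0\\ 2\alpha\gamma & \alpha^2+\beta^2 & \beta\mu-\lambda\gamma-\alpha\nu &\beta\kappa-\alpha\lambda\\ \gamma^2-\beta^2 & 2\alpha\gamma & \beta\kappa-\gamma\nu & \beta\mu-\lambda\gamma-\alpha\nu\\ 0 & \gamma^2-\beta^2 & 0 & \beta\kappa-\gamma\nu \end{pmatrix}. \] Then $\det\mathscr{T}(f_2)$ contains the factor $\beta^2(1+e_2\cos f_2)^2$: there is a trigonometric polynomial $h(f_2)$ (a polynomial in $\cos f_2,\sin f_2$) such that $\det\mathscr{T}(f_2)=(1+e_2\cos f_2)^2\,\beta(f_2)^2\,h(f_2)$ for all $f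_2$.
   Context: Two confocal elliptic orbits are given by Keplerian elements $a_i$, $e_i$, $i_i$, $\Omega_i$, $\omega_i$ ($i=1,2$), with conic parameters $p_i=a_i(1-e_i^2)$ and true anomalies $f_1,f_2$. Define the unit vectors $\mathcal{P}=(\cos\omega_1\cos\Omega_1-\cos i_1\sin\omega_1\sin\Omega_1,\ \cos\omega_1\sin\Omega_1+\cos i_1\sin\omega_1\cos\Omega_1,\ \sin\omega_1\sin i_1)$, $\mathcal{Q}=(-\sin\omega_1\cos\Omega_1-\cos i_1\cos\omega_1\sin\Omega_1,\ -\sin\omega_1\sin\Omega_1+\cos i_1\cos\omega_1\cos\Omega_1,\ \cos\omega_1\sin i_1)$, and $\mathfrak{p},\mathfrak{q}$ by the same formulas with $(i_2,\Omega_2,\omega_2)$ in place of $(i_1,\Omega_1,\omega_1)$. Set $K=\langle\mathcal{P},\mathfrak{p}\rangle$, $L=\langle\mathcal{Q},\mathfrak{p}\rangle$, $M=\langle\mathcal{P},\mathfrak{q}\rangle$, $N=\langle\mathcal{Q},\mathfrak{q}\rangle$. The matrix $\mathscr{T}$ is the Sylvester matrix, with respect to $\cos f_1$, of the polynomials $(\alpha^2+\beta^2)\cos^2 f_1 + 2\alpha\gamma\cos f_1 + \gamma^2-\beta^2$ and $(\beta\kappa - \alpha\lambda)\cos^2 f_1 + (\beta\mu - \lambda\gamma-\alpha\nu)\cos f_1 + \beta\kappa-\gamma\nu$. *)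

(* Defs.v *)
From HB Require Import structures.
From mathcomp Require Import all_boot all_order all_algebra.
From mathcomp Require Import all_classical all_reals all_analysis.
Set Implicit Arguments. Unset Strict Implicit. Unset Printing Implicit Defensive.
Import Order.TTheory GRing.Theory Num.Theory.
Local Open Scope ring_scope.

Section Defs.
Variable R : realType.

Definition Pvec (i Om om : R) : R * R * R :=
  (cos om * cos Om - cos i * sin om * sin Om,
   cos om * sin Om + cos i * sin om * cos Om,
   sin om * sin i).
Definition Qvec (i Om om : R) : R * R * R :=
  (- sin om * cos Om - cos i * cos om * sin Om,
   - sin om * sin Om + cos i * cos om * cos Om,
   cos om * sin i).

Definition dot3 (u v : R * R * R) : R :=
  u.1.1 * v.1.1 + u.1.2 * v.1.2 + u.2 * v.2.

Definition Kc i1 Om1 om1 i2 Om2 om2 := dot3 (Pvec i1 Om1 om1) (Pvec i2 Om2 om2).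
Definition Lc i1 Om1 om1 i2 Om2 om2 := dot3 (Qvec i1 Om1 om1) (Pvec i2 Om2 om2).
Definition Mc i1 Om1 om1 i2 Om2 om2 := dot3 (Pvec i1 Om1 om1) (Qvec i2 Om2 om2).
Definition Nc i1 Om1 om1 i2 Om2 om2 := dot3 (Qvec i1 Om1 om1) (Qvec i2 Om2 om2).

Definition alpha (e1 e2 p1 p2 K L M N f2 : R) : R :=
  p1 * (1 + e2 * cos f2) * (K * sin f2 - M * (e2 + cos f2))
  + p2 * e1 * e2 * sin f2.
Definition beta (e1 e2 p1 p2 K L M N f2 : R) : R :=
  p1 * (1 + e2 * cos f2) * (L * sin f2 - N * (e2 + cos f2)).
Definition gamma (e1 e2 p1 p2 K L M N f2 : R) : R :=
  p2 * e2 * sin f2.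
Definition kappa (e1 e2 p1 p2 K L M N f2 : R) : R :=
  - (p2 * e1 * (L * cos f2 + N * sin f2)).
Definition lambda (e1 e2 p1 p2 K L M N f2 : R) : R :=
  p2 * e1 * (K * cos f2 + M * sin f2).
Definition mu (e1 e2 p1 p2 K L M N f2 : R) : R :=
  - (p2 * (1 + e1 ^+ 2) * (L * cos f2 + N * sin f2)).
Definition nu (e1 e2 p1 p2 K L M N f2 : R) : R :=
  p1 * e1 * (1 + e2 * cos f2) + p2 * (K * cos f2 + M * sin f2).

Definition Tentry (a b g k l m n : R) (r c : nat) : R :=
  match r, c with
  | 0, 0 => a ^+ 2 + b ^+ 2
  | 0, 1 => 0
  | 0, 2 => b * k - a * l
  | 0, 3 => 0
  | 1, 0 => 2 * a * g
  | 1, 1 => a ^+ 2 + b ^+ 2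
  | 1, 2 => b * m - l * g - a * n
  | 1, 3 => b * k - a * l
  | 2, 0 => g ^+ 2 - b ^+ 2
  | 2, 1 => 2 * a * g
  | 2, 2 => b * k - g * n
  | 2, 3 => b * m - l * g - a * n
  | 3, 0 => 0
  | 3, 1 => g ^+ 2 - b ^+ 2
  | 3, 2 => 0
  | 3, 3 => b * k - g * n
  | _, _ => 0
  end.

Definition Tmx (e1 e2 p1 p2 K L M N f2 : R) : 'M[R]_4 :=
  \matrix_(r < 4, c < 4)
    Tentry (alpha e1 e2 p1 p2 K L M N f2) (beta e1 e2 p1 p2 K L M N f2)
           (gamma e1 e2 p1 p2 K L M N f2) (kappa e1 e2 p1 p2 K L M N f2)
           (lambda e1 e2 p1 p2 K L M N f2) (mu e1 e2 p1 p2 K L M N f2)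
           (nu e1 e2 p1 p2 K L M N f2) r c.

(* Evaluation of a bivariate polynomial h(X,Y) in {poly {poly R}}
   (outer variable Y, inner variable X) at X = x, Y = y. *)
Definition eval2 (h : {poly {poly R}}) (x y : R) : R := (h.[y%:P]).[x].

End Defs.

(* Main.v *)
Require Import Defs.
From HB Require Import structures.
From mathcomp Require Import all_boot all_order all_algebra.
From mathcomp Require Import all_classical all_reals all_analysis.
From mathcomp Require Import ring.
Import Order.TTheory GRing.Theory Num.Theory.
Local Open Scope ring_scope.

Definition Hterms : seq (bool * nat * seq nat) :=
  [:: (false, 1, [:: 3; 3; 3; 3; 6; 6; 7; 7; 7; 7]);
  (true, 1, [:: 3; 3; 3; 3; 6; 6; 7; 7; 7; 7; 7; 7]);
  (true, 2, [:: 2; 3; 3; 3; 4; 6; 7; 7]);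
  (false, 4, [:: 2; 3; 3; 3; 4; 6; 7; 7; 7; 7]);
  (true, 2, [:: 2; 3; 3; 3; 4; 6; 7; 7; 7; 7; 7; 7]);
  (false, 1, [:: 2; 2; 3; 3; 5; 5]);
  (true, 2, [:: 2; 2; 3; 3; 5; 5; 7; 7]);
  (false, 1, [:: 2; 2; 3; 3; 5; 5; 7; 7; 7; 7]);
  (false, 1, [:: 2; 2; 3; 3; 4; 4]);
  (true, 3, [:: 2; 2; 3; 3; 4; 4; 7; 7]);
  (false, 3, [:: 2; 2; 3; 3; 4; 4; 7; 7; 7; 7]);
  (true, 1, [:: 2; 2; 3; 3; 4; 4; 7; 7; 7; 7; 7; 7]);
  (false, 2, [:: 1; 3; 3; 3; 5; 6; 7; 7]);
  (true, 2, [:: 1; 3; 3; 3; 5; 6; 7; 7; 7; 7]);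
  (false, 1, [:: 1; 1; 3; 3; 5; 5]);
  (true, 1, [:: 1; 1; 3; 3; 5; 5; 7; 7]);
  (false, 1, [:: 1; 1; 3; 3; 4; 4]);
  (true, 2, [:: 1; 1; 3; 3; 4; 4; 7; 7]);
  (false, 1, [:: 1; 1; 3; 3; 4; 4; 7; 7; 7; 7]);
  (false, 2, [:: 0; 2; 2; 3; 3; 5; 6; 7]);
  (true, 2, [:: 0; 2; 2; 3; 3; 5; 6; 7; 7; 7]);
  (false, 2, [:: 0; 1; 3; 3; 3; 6; 6; 7; 7; 7]);
  (true, 4, [:: 0; 1; 3; 3; 3; 6; 6; 7; 7; 7; 7; 7]);
  (false, 6, [:: 0; 1; 2; 3; 3; 4; 6; 7; 7; 7]);
  (true, 6, [:: 0; 1; 2; 3; 3; 4; 6; 7; 7; 7; 7; 7]);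
  (true, 2, [:: 0; 1; 2; 2; 3; 5; 5; 7]);
  (false, 2, [:: 0; 1; 2; 2; 3; 5; 5; 7; 7; 7]);
  (true, 2, [:: 0; 1; 2; 2; 3; 4; 4; 7]);
  (false, 4, [:: 0; 1; 2; 2; 3; 4; 4; 7; 7; 7]);
  (true, 2, [:: 0; 1; 2; 2; 3; 4; 4; 7; 7; 7; 7; 7]);
  (false, 2, [:: 0; 1; 1; 3; 3; 5; 6; 7]);
  (true, 6, [:: 0; 1; 1; 3; 3; 5; 6; 7; 7; 7]);
  (true, 2, [:: 0; 1; 1; 1; 3; 5; 5; 7]);
  (true, 2, [:: 0; 1; 1; 1; 3; 4; 4; 7]);
  (false, 2, [:: 0; 1; 1; 1; 3; 4; 4; 7; 7; 7]);
  (false, 1, [:: 0; 0; 2; 2; 3; 3; 6; 6; 7; 7]);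
  (true, 1, [:: 0; 0; 2; 2; 3; 3; 6; 6; 7; 7; 7; 7]);
  (false, 2, [:: 0; 0; 2; 2; 2; 3; 4; 6; 7; 7]);
  (true, 2, [:: 0; 0; 2; 2; 2; 3; 4; 6; 7; 7; 7; 7]);
  (true, 1, [:: 0; 0; 2; 2; 2; 2; 4; 4]);
  (false, 2, [:: 0; 0; 2; 2; 2; 2; 4; 4; 7; 7]);
  (true, 1, [:: 0; 0; 2; 2; 2; 2; 4; 4; 7; 7; 7; 7]);
  (true, 4, [:: 0; 0; 1; 2; 2; 3; 5; 6; 7; 7]);
  (true, 2, [:: 0; 0; 1; 2; 2; 2; 4; 5]);
  (false, 2, [:: 0; 0; 1; 2; 2; 2; 4; 5; 7; 7]);
  (false, 1, [:: 0; 0; 1; 1; 3; 3; 6; 6; 7; 7]);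
  (true, 6, [:: 0; 0; 1; 1; 3; 3; 6; 6; 7; 7; 7; 7]);
  (true, 6, [:: 0; 0; 1; 1; 2; 3; 4; 6; 7; 7; 7; 7]);
  (true, 1, [:: 0; 0; 1; 1; 2; 2; 5; 5]);
  (false, 1, [:: 0; 0; 1; 1; 2; 2; 5; 5; 7; 7]);
  (true, 1, [:: 0; 0; 1; 1; 2; 2; 4; 4]);
  (false, 2, [:: 0; 0; 1; 1; 2; 2; 4; 4; 7; 7]);
  (true, 1, [:: 0; 0; 1; 1; 2; 2; 4; 4; 7; 7; 7; 7]);
  (true, 6, [:: 0; 0; 1; 1; 1; 3; 5; 6; 7; 7]);
  (true, 2, [:: 0; 0; 1; 1; 1; 2; 4; 5]);
  (true, 1, [:: 0; 0; 1; 1; 1; 1; 5; 5]);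
  (false, 1, [:: 0; 0; 1; 1; 1; 1; 4; 4; 7; 7]);
  (true, 2, [:: 0; 0; 0; 1; 2; 2; 3; 6; 6; 7; 7; 7]);
  (true, 2, [:: 0; 0; 0; 1; 2; 2; 2; 4; 6; 7]);
  (true, 2, [:: 0; 0; 0; 1; 2; 2; 2; 4; 6; 7; 7; 7]);
  (true, 2, [:: 0; 0; 0; 1; 1; 2; 2; 5; 6; 7]);
  (true, 4, [:: 0; 0; 0; 1; 1; 1; 3; 6; 6; 7; 7; 7]);
  (true, 2, [:: 0; 0; 0; 1; 1; 1; 2; 4; 6; 7]);
  (true, 2, [:: 0; 0; 0; 1; 1; 1; 2; 4; 6; 7; 7; 7]);
  (true, 2, [:: 0; 0; 0; 1; 1; 1; 1; 5; 6; 7]);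
  (true, 1, [:: 0; 0; 0; 0; 1; 1; 2; 2; 6; 6; 7; 7]);
  (true, 1, [:: 0; 0; 0; 0; 1; 1; 1; 1; 6; 6; 7; 7])].

Definition mono (R : comRingType) (vs : seq R) (t : bool * nat * seq nat) : R :=
  (-1) ^+ t.1.1 * t.1.2%:R * \prod_(i <- t.2) nth 0 vs i.

Arguments mono {R}.

Definition Hf (R : comRingType) (w a1 b1 g rho sig p1 e1 : R) : R :=
  \sum_(t <- Hterms) mono [:: w; a1; b1; g; rho; sig; p1; e1] t.

Arguments Hf {R}.

Lemma nth_morph (A B : comRingType) (f : {rmorphism A -> B}) (vs : seq A) i :
  nth 0 (map f vs) i = f (nth 0 vs i).
Proof.
elim: vs i => [|v vs IH] [|i] /=; rewrite ?rmorph0 //.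
Qed.

Lemma Hf_morph (A B : comRingType) (f : {rmorphism A -> B}) (w a1 b1 g rho sig p1 e1 : A) :
  f (Hf w a1 b1 g rho sig p1 e1) = Hf (f w) (f a1) (f b1) (f g) (f rho) (f sig) (f p1) (f e1).
Proof.
rewrite /Hf rmorph_sum; apply: eq_bigr => t _.
rewrite /mono !rmorphM rmorphXn rmorphN1 rmorph_nat rmorph_prod.
congr (_ * _); apply: eq_bigr => i _.
by rewrite -(@nth_morph _ _ f [:: w; a1; b1; g; rho; sig; p1; e1]).
Qed.

Definition Gf (R : comRingType) (a b g k l m n : R) : R :=
  (g ^+ 4 * l ^+ 2 + g ^+ 4 * k ^+ 2 -2 * b * g ^+ 3 * l * m +2 * b * g ^+ 3 * k * n + b ^+ 2 * g ^+ 2 * n ^+ 2 + b ^+ 2 * g ^+ 2 * m ^+ 2 - b ^+ 2 * g ^+ 2 * l ^+ 2 -4 * b ^+ 2 * g ^+ 2 * k ^+ 2 +2 * b ^+ 3 * g * l * m -4 * b ^+ 3 * g * k * n - b ^+ 4 * m ^+ 2 +4 * b ^+ 4 * k ^+ 2 -2 * a * g ^+ 3 * l * n -2 * a * g ^+ 3 * k * m +6 * a * b * g ^+ 2 * k * l +2 * a * b ^+ 3 * m * n -4 * a * b ^+ 3 * k * l + a ^+ 2 * g ^+ 2 * n ^+ 2 + a ^+ 2 * g ^+ 2 * m ^+ 2 - a ^+ 2 * g ^+ 2 * l ^+ 2 +2 * a ^+ 2 * g ^+ 2 * k ^+ 2 -6 * a ^+ 2 * b * g * k * n - a ^+ 2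 * b ^+ 2 * n ^+ 2 - a ^+ 2 * b ^+ 2 * m ^+ 2 + a ^+ 2 * b ^+ 2 * l ^+ 2 +4 * a ^+ 2 * b ^+ 2 * k ^+ 2 +2 * a ^+ 3 * g * l * n -2 * a ^+ 3 * g * k * m +2 * a ^+ 3 * b * m * n -2 * a ^+ 3 * b * k * l - a ^+ 4 * n ^+ 2 + a ^+ 4 * k ^+ 2).

Arguments Gf {R}.

Lemma detT (R : realType) (e1 e2 p1 p2 K L M N f2 : R) :
  let a := alpha e1 e2 p1 p2 K L M N f2 in
  let b := beta e1 e2 p1 p2 K L M N f2 in
  let g := gamma e1 e2 p1 p2 K L M N f2 in
  let k := kappa e1 e2 p1 p2 K L M N f2 in
  let l := lambda e1 e2 p1 p2 K L M N f2 in
  let m := mu e1 e2 p1 p2 K L M N f2 in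
  let n := nu e1 e2 p1 p2 K L M N f2 in
  \det (Tmx e1 e2 p1 p2 K L M N f2) = b ^+ 2 * Gf a b g k l m n.
Proof.
move=> a b g k l m n.
rewrite /Tmx -/a -/b -/g -/k -/l -/m -/n.
rewrite (expand_det_row _ 0) !big_ord_recl big_ord0 /cofactor.
rewrite !(expand_det_row _ 0) !big_ord_recl !big_ord0 /cofactor.
rewrite !(expand_det_row _ 0) !big_ord_recl !big_ord0 /cofactor.
rewrite !det_mx11 !mxE /=.
rewrite /bump /=. clearbody a b g k l m n. rewrite /Gf. ring.
Qed.

Lemma key (R : comRingType) (a b g k l m n w a1 b1 rho sig p1 e1 : R) :
  a = w * a1 + e1 * g -> b = w * b1 -> k = - (e1 * rho) -> l = e1 * sig ->
  m = - ((1 + e1 ^+ 2) * rho) -> n = w * p1 * e1 + sig ->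
  Gf a b g k l m n = w ^+ 2 * Hf w a1 b1 g rho sig p1 e1.
Proof. move=> -> -> -> -> -> ->. rewrite /Gf /Hf /mono /Hterms. rewrite !unlock /=. ring. Qed.

Theorem mainTheorem2 (R : realType)
  (e1 e2 p1 p2 i1 Om1 om1 i2 Om2 om2 : R)
  (he1 : 0 <= e1) (he1' : e1 < 1) (he2 : 0 <= e2) (he2' : e2 < 1)
  (hp1 : 0 < p1) (hp2 : 0 < p2) :
  let K := Kc i1 Om1 om1 i2 Om2 om2 in
  let L := Lc i1 Om1 om1 i2 Om2 om2 in
  let M := Mc i1 Om1 om1 i2 Om2 om2 in
  let N := Nc i1 Om1 om1 i2 Om2 om2 in
  exists h : {poly {poly R}}, forall f2 : R,
    \det (Tmx e1 e2 p1 p2 K L M N f2)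
    = (1 + e2 * cos f2) ^+ 2 * (beta e1 e2 p1 p2 K L M N f2) ^+ 2
      * eval2 h (cos f2) (sin f2).
Proof.
move=> K L M N.
pose C (x : R) : {poly {poly R}} := x%:P%:P.
pose cP : {poly {poly R}} := ('X : {poly R})%:P.
pose sP : {poly {poly R}} := 'X.
exists (Hf (1 + C e2 * cP) (C p1 * (C K * sP - C M * (C e2 + cP)))
           (C p1 * (C L * sP - C N * (C e2 + cP))) (C p2 * C e2 * sP)
           (C p2 * (C L * cP + C N * sP)) (C p2 * (C K * cP + C M * sP))
           (C p1) (C e1)).
move=> f2.
set B := beta e1 e2 p1 p2 K L M N f2.
set W := (1 + e2 * cos f2) ^+ 2.
have HE : forall w a1 b1 g rho sig q1 q2 : {poly {poly R}},
  eval2 (Hf w a1 b1 g rho sig q1 q2) (cos f2) (sin f2) =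
  Hf (eval2 w (cos f2) (sin f2)) (eval2 a1 (cos f2) (sin f2)) (eval2 b1 (cos f2) (sin f2))
     (eval2 g (cos f2) (sin f2)) (eval2 rho (cos f2) (sin f2)) (eval2 sig (cos f2) (sin f2))
     (eval2 q1 (cos f2) (sin f2)) (eval2 q2 (cos f2) (sin f2)).
  move=> w a1 b1 g rho sig q1 q2.
  exact: (@Hf_morph _ _ ((horner_eval (cos f2)) \o (horner_eval ((sin f2)%:P)) : {rmorphism {poly {poly R}} -> R}) w a1 b1 g rho sig q1 q2).
rewrite HE.
have -> : eval2 (1 + C e2 * cP) (cos f2) (sin f2) = 1 + e2 * cos f2 by rewrite /eval2 /C /cP /sP /gamma !hornerE.
have -> : eval2 (C p1 * (C K * sP - C M * (C e2 + cP))) (cos f2) (sin f2) = p1 * (K * sin f2 - M * (e2 + cos f2)) by rewrite /eval2 /C /cP /sP /gamma !hornerE.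
have -> : eval2 (C p1 * (C L * sP - C N * (C e2 + cP))) (cos f2) (sin f2) = p1 * (L * sin f2 - N * (e2 + cos f2)) by rewrite /eval2 /C /cP /sP /gamma !hornerE.
have -> : eval2 (C p2 * C e2 * sP) (cos f2) (sin f2) = gamma e1 e2 p1 p2 K L M N f2 by rewrite /eval2 /C /cP /sP /gamma !hornerE.
have -> : eval2 (C p2 * (C L * cP + C N * sP)) (cos f2) (sin f2) = p2 * (L * cos f2 + N * sin f2) by rewrite /eval2 /C /cP /sP /gamma !hornerE.
have -> : eval2 (C p2 * (C K * cP + C M * sP)) (cos f2) (sin f2) = p2 * (K * cos f2 + M * sin f2) by rewrite /eval2 /C /cP /sP /gamma !hornerE.
have -> : eval2 (C p1) (cos f2) (sin f2) = p1 by rewrite /eval2 /C /cP /sP /gamma !hornerE.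
have -> : eval2 (C e1) (cos f2) (sin f2) = e1 by rewrite /eval2 /C /cP /sP /gamma !hornerE.
rewrite detT.
rewrite (@key R (alpha e1 e2 p1 p2 K L M N f2) B
  (gamma e1 e2 p1 p2 K L M N f2) (kappa e1 e2 p1 p2 K L M N f2)
  (lambda e1 e2 p1 p2 K L M N f2) (mu e1 e2 p1 p2 K L M N f2) (nu e1 e2 p1 p2 K L M N f2)
  (1 + e2 * cos f2) (p1 * (K * sin f2 - M * (e2 + cos f2)))
  (p1 * (L * sin f2 - N * (e2 + cos f2))) (p2 * (L * cos f2 + N * sin f2))
  (p2 * (K * cos f2 + M * sin f2)) p1 e1);
  first (rewrite /W /B; ring).
all: rewrite /B /alpha /beta /gamma /kappa /lambda /mu /nu; ring.
Qed.
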